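(* Let $1\le p\le\infty$ and $a\in\mathbb{D}=\{z\in\mathbb{C}:|z|<1\}$, and let $R(p,a)$ be the least constant such that $b_{\mathbb{D},p}(T_a(z_1),T_a(z_2))\le R(p,a)\,b_{\mathbb{D},p}(z_1,z_2)$ for all $z_1,z_2\in\mathbb{D}$, where $T_a(z)=\frac{z-a}{1-\overline{a}z}$. Then $R(p,a)\ge 1+|a|$.
   Context: For $z_1,z_2\in\mathbb{D}$ and $1\le p<\infty$, $b_{\mathbb{D},p}(z_1,z_2)=\sup_{z\in\partial\mathbb{D}}\frac{|z_1-z_2|}{\sqrt[p]{|z_1-z|^p+|z-z_2|^p}}$, and $b_{\mathbb{D},\infty}(z_1,z_2)=\sup_{z\in\partial\mathbb{D}}\frac{|z_1-z_2|}{\max\{|z_1-z|,|z_2-z|\}}$. (Such a finite least constant exists, since $T_a$ is Lipschitz with respect to $b_{\mathbb{D},p}$.) *)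

(* Defs.v *)
From mathcomp Require Import all_boot all_order all_algebra.
From mathcomp Require Import all_classical all_reals all_analysis.
From mathcomp Require Import complex.
Set Implicit Arguments. Unset Strict Implicit. Unset Printing Implicit Defensive.
Import Order.TTheory GRing.Theory Num.Theory.
Local Open Scope ring_scope.
Local Open Scope classical_set_scope.

Section Defs.
Variable R : realType.
Local Notation C := R[i].

Definition cabs (z : C) : R := ComplexField.Normc.normc z.

Definition unit_disk : set C := [set z | cabs z < 1].
Definition unit_circle : set C := [set z | cabs z = 1].

(* the ratio inside the supremum defining b_{D,p}; p = +oo is the max case *)
Definition bratio (p : \bar R) (z1 z2 z : C) : R :=
  match p with
  | EFin q => cabs (z1 - z2) /
      powR (powR (cabs (z1 - z)) q + powR (cabs (z - z2)) q) q^-1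
  | _ => cabs (z1 - z2) / Num.max (cabs (z1 - z)) (cabs (z2 - z))
  end.

Definition bD (p : \bar R) (z1 z2 : C) : R :=
  sup [set bratio p z1 z2 z | z in unit_circle].

Definition Tmob (a z : C) : C := (z - a) / (1 - conjc a * z).

Definition lip_const (p : \bar R) (a : C) (K : R) : Prop :=
  forall z1 z2, unit_disk z1 -> unit_disk z2 ->
    bD p (Tmob a z1) (Tmob a z2) <= K * bD p z1 z2.

Definition Rpa (p : \bar R) (a : C) : R := inf [set K | lip_const p a K].
End Defs.

(* Main.v *)
Require Import Defs.
From mathcomp Require Import all_boot all_order all_algebra.
From mathcomp Require Import all_classical all_reals all_analysis.
From mathcomp Require Import complex.
From mathcomp Require Import ring lra.
Import Order.TTheory GRing.Theory Num.Theory.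
Set Implicit Arguments. Unset Strict Implicit.
Local Open Scope ring_scope.
Local Open Scope complex_scope.

Section CL.
Variable R : realType.
Local Notation C := R[i].
Implicit Types z w : C.

Lemma cabs_ge0 z : 0 <= cabs z.
Proof. by case: z => x y; rewrite /cabs /= sqrtr_ge0. Qed.

Lemma cabsM z w : cabs (z * w) = cabs z * cabs w.
Proof. exact: ComplexField.Normc.normcM. Qed.

Lemma cabsV z : cabs (z^-1) = (cabs z)^-1.
Proof. exact: ComplexField.Normc.normcV. Qed.

Lemma cabsD z w : cabs (z + w) <= cabs z + cabs w.
Proof. exact: (@le_normcD R z w). Qed.

Lemma cabsN z : cabs (- z) = cabs z.
Proof. exact: (@normcN R z). Qed.

Lemma cabs_real (x : R) : cabs (x%:C) = `|x|.
Proof. by rewrite /cabs /= expr0n /= addr0 sqrtr_sqr. Qed.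

Lemma cabs_conj z : cabs (conjc z) = cabs z.
Proof. by case: z => x y; rewrite /cabs /= sqrrN. Qed.

Lemma mul_conj z : z * conjc z = ((cabs z) ^+ 2)%:C.
Proof.
case: z => x y; rewrite /cabs /= sqr_sqrtr ?addr_ge0 ?sqr_ge0 //.
apply/eqP; rewrite eq_complex /=; apply/andP; split; apply/eqP; ring.
Qed.

Lemma cabs_eq0 z : (cabs z == 0) = (z == 0).
Proof.
apply/eqP/eqP => [|->]; first exact: ComplexField.Normc.eq0_normc.
exact: ComplexField.Normc.normc0.
Qed.

Lemma cabsB z w : cabs (z - w) = cabs (w - z).
Proof. by rewrite -cabsN opprB. Qed.

Lemma cabs_rev z w : cabs z - cabs w <= cabs (z - w).
Proof. have := cabsD (z - w) w; rewrite subrK; lra. Qed.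

Lemma cabs1 : cabs (1 : C) = 1.
Proof. exact: ComplexField.Normc.normc1. Qed.
End CL.
Section NL.
Variable R : realType.

Definition Np (p : \bar R) (x y : R) : R :=
  match p with
  | EFin q => powR (powR x q + powR y q) q^-1
  | _ => Num.max x y
  end.

Definition okp (p : \bar R) := (1%:E <= p)%E.

Lemma powRK (x q : R) : 0 <= x -> 0 < q -> powR (powR x q) q^-1 = x.
Proof. by move=> x0 q0; rewrite -powRrM divff ?gt_eqF // powRr1. Qed.

Lemma Np_hom p l x y : okp p -> 0 <= l -> 0 <= x -> 0 <= y ->
  Np p (l * x) (l * y) = l * Np p x y.
Proof.
case: p => [q||] //= hq; (try have q1 : 1 <= q by rewrite -(@lee_fin R)); move=> l0 x0 y0.
  have q0 : 0 < q by lra.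
  rewrite !powRM // -mulrDr powRM ?powR_ge0 ?addr_ge0 ?powR_ge0 //.
  by rewrite powRK.
by rewrite maxr_pMr.
Qed.

Lemma Np_mono p x y x' y' : okp p -> 0 <= x -> 0 <= y -> x <= x' -> y <= y' ->
  Np p x y <= Np p x' y'.
Proof.
case: p => [q||] //= hq; (try have q1 : 1 <= q by rewrite -(@lee_fin R)); move=> x0 y0 xx yy.
  have q0 : 0 <= q by lra.
  have qi : 0 <= q^-1 by rewrite invr_ge0.
  apply: ge0_ler_powR => //; rewrite ?nnegrE ?addr_ge0 ?powR_ge0 //.
  apply: lerD; apply: ge0_ler_powR => //; rewrite nnegrE; lra.
by rewrite ge_max !le_max xx yy orbT.
Qed.

Lemma Np_gel p x y : okp p -> 0 <= x -> 0 <= y -> x <= Np p x y.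
Proof.
case: p => [q||] //= hq; (try have q1 : 1 <= q by rewrite -(@lee_fin R)); move=> x0 y0.
  have q0 : 0 < q by lra.
  have qi : 0 <= q^-1 by rewrite invr_ge0 ltW.
  rewrite -[leLHS](powRK x0 q0).
  apply: ge0_ler_powR => //; rewrite ?nnegrE ?addr_ge0 ?powR_ge0 //.
  by rewrite lerDl powR_ge0.
by rewrite le_max lexx.
Qed.

Lemma Np_ge0 p x y : okp p -> 0 <= x -> 0 <= y -> 0 <= Np p x y.
Proof. by move=> hp x0 y0; exact: le_trans x0 (Np_gel hp x0 y0). Qed.

Lemma Np11 p : okp p -> 0 < Np p 1 1.
Proof. by move=> hp; exact: lt_le_trans ltr01 (Np_gel hp ler01 ler01). Qed.

Lemma Npxx p x : okp p -> 0 <= x -> Np p x x = x * Np p 1 1.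
Proof. by move=> hp x0; rewrite -Np_hom ?mulr1. Qed.

End NL.

Section B.
Variable R : realType.
Local Notation C := R[i].
Implicit Types z w : C.

Lemma bratioE p z1 z2 z : okp p ->
  bratio p z1 z2 z = cabs (z1 - z2) / Np p (cabs (z1 - z)) (cabs (z - z2)).
Proof. by case: p => [q||] //= _; rewrite (cabsB z2 z). Qed.

Lemma div_le (d N m : R) : 0 <= d -> 0 < m -> m <= N -> d / N <= d / m.
Proof.
move=> d0 m0 mN; apply: ler_wpM2l => //.
by rewrite lef_pV2 ?posrE // (lt_le_trans m0 mN).
Qed.

Lemma disk_circ z1 z : unit_disk z1 -> unit_circle z -> 1 - cabs z1 <= cabs (z1 - z).
Proof.
rewrite /unit_disk /unit_circle /= => h1 h; rewrite cabsB.
by have := cabs_rev z z1; rewrite h.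
Qed.

Lemma bratio_ub p z1 z2 z : okp p -> unit_disk z1 -> unit_circle z ->
  bratio p z1 z2 z <= cabs (z1 - z2) / (1 - cabs z1).
Proof.
move=> hp h1 h; rewrite bratioE //; apply: div_le; rewrite ?cabs_ge0 //.
  by move: h1; rewrite /unit_disk /=; lra.
apply: le_trans (disk_circ h1 h) (Np_gel _ _ _) => //; exact: cabs_ge0.
Qed.

Lemma bratio_ge0 p z1 z2 z : okp p -> 0 <= bratio p z1 z2 z.
Proof. by move=> hp; rewrite bratioE // divr_ge0 ?cabs_ge0 ?Np_ge0 ?cabs_ge0. Qed.

Lemma bD_ge p z1 z2 z : okp p -> unit_disk z1 -> unit_circle z ->
  bratio p z1 z2 z <= bD p z1 z2.
Proof.
move=> hp h1 h; apply: ub_le_sup; last by exists z.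
exists (cabs (z1 - z2) / (1 - cabs z1)) => y [x hx <-].
exact: bratio_ub.
Qed.

Lemma circ1 : unit_circle (1 : C).
Proof. exact: cabs1. Qed.

Lemma bD_le p z1 z2 M : (forall z, unit_circle z -> bratio p z1 z2 z <= M) ->
  bD p z1 z2 <= M.
Proof.
move=> h; apply: ge_sup; first by exists (bratio p z1 z2 1), 1; [exact: circ1|].
by move=> y [x hx <-]; exact: h.
Qed.

Lemma bD_ge0 p z1 z2 : okp p -> unit_disk z1 -> 0 <= bD p z1 z2.
Proof.
move=> hp h1; apply: (le_trans (y:=bratio p z1 z2 1)).
  exact: bratio_ge0.
by apply: bD_ge => //; exact: circ1.
Qed.

Lemma key p (X x1 x2 D d1 d2 l m : R) : okp p -> 0 < l -> 0 < m -> 0 < d1 ->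
  0 <= d2 -> 0 <= D -> X = l / m * D -> l * d1 <= x1 -> l * d2 <= x2 ->
  X / Np p x1 x2 <= m^-1 * (D / Np p d1 d2).
Proof.
move=> hp l0 m0 d10 d20 D0 -> h1 h2.
have Nz : 0 < Np p d1 d2.
  by apply: (lt_le_trans d10); apply: Np_gel => //; exact: ltW.
have e : Np p (l * d1) (l * d2) = l * Np p d1 d2 by rewrite Np_hom // ltW.
have le : l * Np p d1 d2 <= Np p x1 x2.
  by rewrite -e; apply: Np_mono => //; rewrite mulr_ge0 // ltW.
apply: le_trans (div_le _ _ le) _.
- by rewrite mulr_ge0 // divr_ge0 // ltW.
- by rewrite mulr_gt0.
rewrite le_eqVlt; apply/orP; left; apply/eqP; field.
by rewrite !gt_eqF.
Qed.

End B.

Section M.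
Variable R : realType.
Local Notation C := R[i].
Implicit Types z w : C.
Variable a : C.
Hypothesis ha : cabs a < 1.
Local Notation r := (cabs a).

Lemma r_ge0 : 0 <= r. Proof. exact: cabs_ge0. Qed.

Lemma den_bounds z : cabs z <= 1 ->
  1 - r <= cabs (1 - conjc a * z) /\ cabs (1 - conjc a * z) <= 1 + r.
Proof.
move=> hz; have hc : cabs (conjc a * z) <= r.
  rewrite cabsM cabs_conj -[leRHS]mulr1; apply: ler_wpM2l => //; exact: r_ge0.
split.
  have := cabs_rev 1 (conjc a * z); rewrite cabs1 => hh.
  by apply: le_trans hh; rewrite lerD2l lerN2.
have := cabsD 1 (- (conjc a * z)); rewrite cabs1 cabsN => hh.
by apply: le_trans hh _; rewrite lerD2l.
Qed.

Lemma den_pos z : cabs z <= 1 -> 0 < cabs (1 - conjc a * z).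
Proof. move=> /den_bounds [h _]; have ha' : 0 < 1 - r by rewrite subr_gt0. lra. Qed.

Lemma den_nz z : cabs z <= 1 -> 1 - conjc a * z != 0.
Proof. by move=> /den_pos; rewrite -cabs_eq0 => h; rewrite gt_eqF. Qed.

Lemma mob_diff z y : cabs z <= 1 -> cabs y <= 1 ->
  Tmob a z - Tmob a y =
  (1 - conjc a * a) * (z - y) / ((1 - conjc a * z) * (1 - conjc a * y)).
Proof.
move=> hz hy; have := den_nz hz; have := den_nz hy.
rewrite /Tmob => n1 n2; field; rewrite n1 n2 //.
Qed.

Lemma cabs_c : cabs (1 - conjc a * a) = 1 - r ^+ 2.
Proof.
rewrite mulrC mul_conj.
have -> : (1 : C) - ((r ^+ 2)%:C) = (1 - r ^+ 2)%:C by rewrite rmorphB rmorph1.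
rewrite cabs_real.
rewrite ger0_norm // subr_ge0; apply: exprn_ile1; [exact: cabs_ge0|exact: ltW].
Qed.

Lemma cabs_mob_diff z y : cabs z <= 1 -> cabs y <= 1 ->
  cabs (Tmob a z - Tmob a y) =
  (1 - r ^+ 2) * cabs (z - y) / (cabs (1 - conjc a * z) * cabs (1 - conjc a * y)).
Proof.
move=> hz hy; rewrite mob_diff // cabsM cabsV !cabsM cabs_c //.
Qed.


Lemma ha1 : 0 < 1 - r. Proof. by rewrite subr_gt0. Qed.

Lemma c_pos : 0 < 1 - r ^+ 2.
Proof. rewrite subr_gt0 expr_lt1 //; exact: cabs_ge0. Qed.

Lemma c_nz : 1 - conjc a * a != 0.
Proof. by rewrite -cabs_eq0 cabs_c gt_eqF // c_pos. Qed.

Lemma circ_conj w : unit_circle w -> w * conjc w = 1.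
Proof. by rewrite /unit_circle /= mul_conj => ->; rewrite expr1n. Qed.

Lemma preimage w : unit_circle w -> exists zeta, unit_circle zeta /\ Tmob a zeta = w.
Proof.
move=> hw.
have hw1 := circ_conj hw.
have hD : 1 + conjc a * w != 0.
  have -> : 1 + conjc a * w = 1 - conjc a * (- w) by rewrite mulrN opprK.
  by apply: den_nz; rewrite cabsN hw.
exists ((w + a) / (1 + conjc a * w)); split.
  rewrite /unit_circle /= cabsM cabsV.
  have -> : w + a = w * (1 + conjc w * a) by rewrite mulrDr mulr1 mulrA hw1 mul1r.
  rewrite cabsM hw mul1r -cabs_conj rmorphD rmorph1 rmorphM /= conjcK [w * _]mulrC.
  by rewrite divff // cabs_eq0.
have e1 : (w + a) / (1 + conjc a * w) - a = w * (1 - conjc a * a) / (1 + conjc a * w).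
  by field.
have e2 : 1 - conjc a * ((w + a) / (1 + conjc a * w)) = (1 - conjc a * a) / (1 + conjc a * w).
  by field.
rewrite /Tmob e1 e2; field.
by rewrite c_nz hD.
Qed.


Lemma disk_le1 z : unit_disk z -> cabs z <= 1.
Proof. by rewrite /unit_disk /= => /ltW. Qed.

Lemma ratio_le (A2 B : R) : 1 - r <= A2 -> B <= 1 + r -> 0 < B ->
  (1 - r) / (1 + r) / A2 <= B^-1.
Proof.
move=> hA hB B0.
have h1 := ha1; have r0 := r_ge0.
have A0 : 0 < A2 by lra.
rewrite ler_pdivrMr // [B^-1 * A2]mulrC ler_pdivlMr //.
apply: (le_trans _ hA).
have e : (1 - r) / (1 + r) * (1 + r) = 1 - r by rewrite divfK // gt_eqF //; lra.
rewrite -[leRHS]e; apply: ler_wpM2l => //.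
rewrite divr_ge0 //; lra.
Qed.

Lemma shuffle (c d A1 A2 B m : R) : 0 <= c -> 0 <= d -> 0 < A1 -> 0 < A2 -> 0 < B ->
  m / A2 <= B^-1 -> c * m / (A1 * A2) * d <= c * d / (A1 * B).
Proof.
move=> c0 d0 A10 A20 B0 h.
have -> : c * m / (A1 * A2) * d = (c * d / A1) * (m / A2).
  by field; rewrite !gt_eqF.
have -> : c * d / (A1 * B) = (c * d / A1) * B^-1.
  by field; rewrite !gt_eqF.
by apply: ler_wpM2l => //; rewrite divr_ge0 ?mulr_ge0 // ltW.
Qed.

Lemma lip_ratio p z1 z2 zeta : okp p -> unit_disk z1 -> unit_disk z2 ->
  unit_circle zeta ->
  bratio p (Tmob a z1) (Tmob a z2) (Tmob a zeta) <=
  (1 + r) / (1 - r) * bratio p z1 z2 zeta.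
Proof.
move=> hp h1 h2 hz.
have l1 := disk_le1 h1; have l2 := disk_le1 h2.
have lz : cabs zeta <= 1 by rewrite hz.
have [A1l A1u] := den_bounds l1; have [A2l A2u] := den_bounds l2.
have [Bl Bu] := den_bounds lz.
have A1p := den_pos l1; have A2p := den_pos l2; have Bp := den_pos lz.
set A1 := cabs (1 - conjc a * z1) in A1l A1u A1p.
set A2 := cabs (1 - conjc a * z2) in A2l A2u A2p.
set B := cabs (1 - conjc a * zeta) in Bl Bu Bp.
have h1r := ha1; have r0 := r_ge0; have cp := c_pos.
set m := (1 - r) / (1 + r).
have m0 : 0 < m by rewrite divr_gt0 //; lra.
have -> : (1 + r) / (1 - r) = m^-1 by rewrite invf_div.
rewrite !bratioE //.
apply: (@key _ p _ _ _ _ _ _ ((1 - r ^+ 2) * m / (A1 * A2))) => //.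
- by apply: divr_gt0; apply: mulr_gt0.
- by have := disk_circ h1 hz; move: h1; rewrite /unit_disk /=; lra.
- exact: cabs_ge0.
- exact: cabs_ge0.
- rewrite cabs_mob_diff // -/A1 -/A2; field.
  by rewrite !gt_eqF.
- rewrite cabs_mob_diff // -/A1 -/B; apply: shuffle => //; rewrite ?cabs_ge0 //.
    by apply: ltW.
  exact: ratio_le.
- rewrite cabs_mob_diff // -/A2 -/B cabsB [B * A2]mulrC [A1 * A2]mulrC.
  apply: shuffle => //; rewrite ?cabs_ge0 //.
    by apply: ltW.
  exact: ratio_le.
Qed.

End M.

Section F.
Variable R : realType.
Local Notation C := R[i].

Lemma cabs0 : cabs (0 : C) = 0.
Proof. exact: ComplexField.Normc.normc0. Qed.

Lemma u_exists (a : C) : exists u : C, cabs u = 1 /\ a = - ((cabs a)%:C * u).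
Proof.
have [->|a0] := eqVneq a 0.
  by exists 1; split; [exact: cabs1 | rewrite cabs0 mul0r oppr0].
have r0 : cabs a != 0 by rewrite cabs_eq0.
have rC0 : (cabs a)%:C != 0 by rewrite -cabs_eq0 cabs_real normr_eq0.
exists (- (a / (cabs a)%:C)); split.
  by rewrite cabsN cabsM cabsV cabs_real ger0_norm ?cabs_ge0 // divff.
by rewrite mulrN opprK mulrC divfK.
Qed.

Lemma final (r K : R) : 0 <= r < 1 -> 0 < K ->
  (forall d : R, 0 < d < 1 -> (1 + r) * (1 - d) <= K * (1 + r * d)) -> 1 + r <= K.
Proof.
move=> /andP [r0 r1] K0 h.
rewrite leNgt; apply/negP => hK.
pose e := 1 + r - K.
have e0 : 0 < e by rewrite /e; lra.
pose d := e / (2 * (e + 2 + K)).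
have den : 0 < 2 * (e + 2 + K) by lra.
have dd : d * (2 * (e + 2 + K)) = e by rewrite /d divfK // gt_eqF.
have d0 : 0 < d by rewrite /d divr_gt0.
have d1 : d < 1 by nra.
have := h d; rewrite d0 d1 => /(_ isT).
rewrite -/e in dd.
have h2 : d * (2 + K) < e by nra.
have dK : 0 < d * K by apply: mulr_gt0.
have h3 : d * K * r <= d * K by nra.
have h4 : d * r <= d by nra.
rewrite /e in h2 => hh.
have : (1 + r) * (1 - d) - K * (1 + r * d) = (1 + r - K) - d - d * r - d * K * r by ring.
nra.
Qed.

End F.

Section G.
Variable R : realType.
Local Notation C := R[i].

Lemma conj_realM (x : R) (u : C) : conjc (- (x%:C * u)) = - (x%:C * conjc u).
Proof.
case: u => u1 u2; apply/eqP; rewrite eq_complex /=; apply/andP; split; apply/eqP; ring.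
Qed.

Lemma lip_nonempty p (a : C) : okp p -> cabs a < 1 ->
  lip_const p a ((1 + cabs a) / (1 - cabs a)).
Proof.
move=> hp ha z1 z2 h1 h2; apply: bD_le => w hw.
have [zeta [hz <-]] := preimage ha hw.
apply: le_trans (lip_ratio ha hp h1 h2 hz) _.
apply: ler_wpM2l; last exact: bD_ge.
have := ha1 ha; have := r_ge0 a => r0 r1.
by rewrite divr_ge0 //; lra.
Qed.

Lemma lower p (a : C) K : okp p -> cabs a < 1 -> lip_const p a K -> 1 + cabs a <= K.
Proof.
move=> hp ha hK.
have r0 := r_ge0 a; have r1 := ha1 ha.
set r := cabs a in r0 r1 ha *.
have [u [hu ea]] := u_exists a; rewrite -/r in ea.
have M0 := Np11 hp; set M := Np p 1 1 in M0.
have cu : conjc u * u = 1 by rewrite mulrC circ_conj.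
have hz1 : unit_disk (0 : C) by change (cabs (0 : C) < 1); rewrite cabs0.
have hw1 : Tmob a 0 = r%:C * u.
  by rewrite /Tmob mulr0 subr0 invr1 mulr1 sub0r ea opprK.
have w1d : unit_disk (r%:C * u) by change (cabs (r%:C * u) < 1); rewrite cabsM cabs_real hu mulr1 ger0_norm.
have key1 : forall d : R, 0 < d < 1 ->
    (0 < K) /\ (1 + r) * (1 - d) <= K * (1 + r * d).
  move=> d /andP [d0 d1].
  have rd0 : 0 < 1 + r * d by nra.
  have rdC : (1 + r * d)%:C != 0 :> C by rewrite -cabs_eq0 cabs_real normr_eq0 gt_eqF.
  pose s := (d + r) / (1 + r * d).
  have hz2 : unit_disk (d%:C * u).
    by change (cabs (d%:C * u) < 1); rewrite cabsM cabs_real hu mulr1 ger0_norm //; lra.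
  have hw2 : Tmob a (d%:C * u) = s%:C * u.
    rewrite /Tmob.
    have e : forall x y : C, 1 - (- (x * conjc u)) * (y * u) = 1 + x * y * (conjc u * u).
      by move=> x y; ring.
    rewrite ea conj_realM e cu mulr1.
    have -> : d%:C * u - - (r%:C * u) = (d + r)%:C * u by rewrite rmorphD /=; ring.
    rewrite /s rmorphM fmorphV /=.
    have -> : (1 + r%:C * d%:C : C) = (1 + r * d)%:C by rewrite rmorphD rmorph1 rmorphM.
    by rewrite mulrAC.
  have sr : s - r = d * (1 - r ^+ 2) / (1 + r * d).
    by rewrite /s; field; rewrite gt_eqF.
  have s1 : 1 - s = (1 - r) * (1 - d) / (1 + r * d).
    by rewrite /s; field; rewrite gt_eqF.
  have cp : 0 < 1 - r ^+ 2 by nra.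
  have sr0 : 0 < s - r by rewrite sr; apply: divr_gt0 => //; apply: mulr_gt0.
  have s10 : 0 <= 1 - s by rewrite s1; apply: divr_ge0; [apply: mulr_ge0; lra | lra].
  have s1r : 1 - s <= 1 - r by lra.
  have Lw : (s - r) / ((1 - r) * M) <= bD p (Tmob a 0) (Tmob a (d%:C * u)).
    rewrite hw1 hw2; apply: le_trans (bD_ge _ hp w1d hu).
    rewrite bratioE //.
    have -> : r%:C * u - s%:C * u = (r - s)%:C * u by rewrite rmorphB /=; ring.
    have -> : r%:C * u - u = (r - 1)%:C * u by rewrite rmorphB /=; ring.
    have -> : u - s%:C * u = (1 - s)%:C * u by rewrite rmorphB /=; ring.
    have n1 : `|r - s| = s - r by rewrite ler0_norm ?opprB //; lra.
    have n2 : `|r - 1| = 1 - r by rewrite ler0_norm ?opprB //; lra.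
    have n3 : `|1 - s| = 1 - s by rewrite ger0_norm.
    rewrite !cabsM !cabs_real hu !mulr1 n1 n2 n3; apply: div_le; try lra.
      by apply: (lt_le_trans r1); apply: Np_gel => //; lra.
    rewrite -Npxx //; try lra.
    by apply: Np_mono => //; lra.
  have Uz : bD p 0 (d%:C * u) <= d / ((1 - d) * M).
    apply: bD_le => z hz.
    rewrite bratioE // sub0r cabsN cabsM cabs_real hu mulr1 ger0_norm; last by lra.
    rewrite sub0r cabsN hz.
    apply: div_le; try lra.
      by apply: mulr_gt0; lra.
    rewrite -Npxx //; last by lra.
    have := cabs_rev z (d%:C * u); rewrite hz cabsM cabs_real hu mulr1 ger0_norm; last by lra.
    by move=> hh; apply: Np_mono => //; lra.
  have bz0 := @bD_ge0 R p 0 (d%:C * u) hp hz1.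
  have hK' := hK _ _ hz1 hz2.
  have Lw0 : 0 < (s - r) / ((1 - r) * M) by apply: divr_gt0 => //; apply: mulr_gt0.
  have K0 : 0 < K by nra.
  split => //.
  have : (s - r) / ((1 - r) * M) <= K * (d / ((1 - d) * M)).
    apply: le_trans Lw _; apply: le_trans hK' _.
    by apply: ler_wpM2l => //; apply: ltW.
  pose t := d / ((1 + r * d) * (1 - d) * M).
  have t0 : 0 < t by rewrite /t; apply: divr_gt0 => //; apply: mulr_gt0 => //; apply: mulr_gt0 => //; lra.
  have -> : (s - r) / ((1 - r) * M) = ((1 + r) * (1 - d)) * t.
    rewrite sr /t; field.
    by rewrite !gt_eqF //; lra.
  have -> : K * (d / ((1 - d) * M)) = (K * (1 + r * d)) * t.
    rewrite /t; field.
    by rewrite !gt_eqF //; lra.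
  by rewrite ler_pM2r.
have [K0 _] := key1 (1 / 2) ltac:(apply/andP; split; lra).
apply: final K0 (fun d hd => (key1 d hd).2).
by apply/andP; split.
Qed.

End G.

Local Close Scope complex_scope.
Local Open Scope ring_scope.

Theorem theorem4p4 (R : realType) (p : \bar R) (a : R[i]) :
  (1%:E <= p)%E -> unit_disk a ->
  1 + cabs a <= Rpa p a.
Proof.
move=> hp ha; rewrite /Rpa; apply: lb_le_inf.
  by exists ((1 + cabs a) / (1 - cabs a)); exact: lip_nonempty.
by move=> K hK; exact: lower hp ha hK.
Qed.
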